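(* Let $k/\mathbb{Q}$ be a finite extension and $\Lambda$ a finitely generated subgroup of $\mathrm{GL}(n;k)$, and let $\Gamma$ be a unipotent subgroup of $\Lambda$. Then there exists a torsion-free finite index subgroup $\Lambda_0$ of $\Lambda$ with $\Gamma\subseteq\Lambda_0$.
   Context: A subgroup is unipotent if it is conjugate in $\mathrm{GL}(n;\mathbb{C})$ into the group of upper triangular matrices with all diagonal entries equal to 1. *)

(* Defs.v *)
From HB Require Import structures.
From mathcomp Require Import all_boot all_order all_algebra.
From mathcomp Require Import complex reals.
Set Implicit Arguments. Unset Strict Implicit. Unset Printing Implicit Defensive.
Import Order.TTheory GRing.Theory Num.Theory.
Local Open Scope ring_scope.

(* k is a finite extension of Q: k is finite-dimensional as a Q-vector space,
   i.e. spanned over Q (acting through ratr) by finitely many elements. *)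
Definition finite_over_Q (k : fieldType) : Prop :=
  exists (d : nat) (b : 'I_d -> k),
    forall x : k, exists c : 'I_d -> rat, x = \sum_(i < d) ratr (c i) * b i.

Definition GL_subgroup (F : fieldType) (n : nat) (G : 'M[F]_n -> Prop) : Prop :=
  [/\ G 1%:M,
      (forall g, G g -> g \in unitmx),
      (forall g h, G g -> G h -> G (g *m h)) &
      (forall g, G g -> G (invmx g))].

Definition GL_subset (F : fieldType) (n : nat) (A B : 'M[F]_n -> Prop) : Prop :=
  forall g, A g -> B g.

Definition GL_generated (F : fieldType) (n : nat) (s : seq 'M[F]_n)
  (g : 'M[F]_n) : Prop :=
  forall H : 'M[F]_n -> Prop, GL_subgroup H -> (forall x, x \in s -> H x) -> H g.

Definition GL_fingen (F : fieldType) (n : nat) (G : 'M[F]_n -> Prop) : Prop :=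
  GL_subgroup G /\
  exists s : seq 'M[F]_n, all (fun x => x \in unitmx) s /\
    forall g, G g <-> GL_generated s g.

Definition mxpow (F : fieldType) (n : nat) (g : 'M[F]_n) (m : nat) : 'M[F]_n :=
  iter m (mulmx g) 1%:M.

Definition torsion_free (F : fieldType) (n : nat) (G : 'M[F]_n -> Prop) : Prop :=
  forall g m, G g -> (0 < m)%N -> mxpow g m = 1%:M -> g = 1%:M.

Definition finite_index (F : fieldType) (n : nat) (H G : 'M[F]_n -> Prop) : Prop :=
  exists s : seq 'M[F]_n, (forall x, x \in s -> G x) /\
    forall g, G g -> exists2 x, x \in s & H (invmx x *m g).

Definition upper_unitriangular (F : fieldType) (n : nat) (A : 'M[F]_n) : Prop :=
  forall i j : 'I_n, ((j < i)%N -> A i j = 0) /\ (i = j -> A i j = 1).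

(* G (a subgroup of GL(n;k), k embedded in C via f) is unipotent: conjugate in
   GL(n;C) into the upper unitriangular matrices *)
Definition unipotent_subgroup (k : fieldType) (C : fieldType)
  (f : {rmorphism k -> C}) (n : nat) (G : 'M[k]_n -> Prop) : Prop :=
  exists P : 'M[C]_n, P \in unitmx /\
    forall g, G g -> upper_unitriangular (P *m map_mx f g *m invmx P).

(* Main.v *)
(* Proof via reduction modulo two large primes. *)
From HB Require Import structures.
From mathcomp Require Import all_boot all_order all_algebra all_field.
From Stdlib Require Import Classical ClassicalEpsilon.
Require Import Defs.
From mathcomp Require Import complex reals.
From mathcomp Require Import zify.
From mathcomp Require Import ring.
Set Implicit Arguments. Unset Strict Implicit. Unset Printing Implicit Defensive.
Import Order.TTheory GRing.Theory Num.Theory.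
Local Open Scope ring_scope.

Lemma cross_eq (F : fieldType) (a b c d : F) : b != 0 -> d != 0 -> a / b = c / d -> a * d - c * b = 0.
Proof.
move=> Hb Hd E; have := congr1 (fun x => x * (b * d)) E.
have -> : a / b * (b * d) = a * d by field.
have -> : c / d * (b * d) = c * b by field.
by move=> ->; rewrite subrr.
Qed.


Lemma bin_pexp0 (q e j : nat) : prime q -> (0 < j < q ^ e)%N -> (q %| 'C(q ^ e, j))%N.
Proof.
move=> qP /andP [j0 jlt].
case: j j0 jlt => // j _ jlt.
have e0 : (0 < e)%N by case: e jlt => //; rewrite expn0.
have E := mul_bin_diag (q ^ e) j.
apply: contraT => Hc.
have cop : coprime (q ^ e) 'C(q ^ e, j.+1) by rewrite coprime_pexpl // prime_coprime.
have : (q ^ e %| j.+1 * 'C(q ^ e, j.+1))%N by rewrite -E; apply: dvdn_mulr.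
rewrite Gauss_dvdl //; by rewrite gtnNdvd.
Qed.

Section Pint.
Variable p : nat.
Hypothesis pP : prime p.

Definition pint (r : rat) := exists a b : int, ~~ (p %| b)%Z /\ r = a%:~R / b%:~R.

Lemma ndvd_neq0 (b : int) : ~~ (p %| b)%Z -> (b%:~R : rat) != 0.
Proof. by move=> H; rewrite intr_eq0; apply: contra H => /eqP ->; rewrite dvdz0. Qed.

Lemma ndvdM (a b : int) : ~~ (p %| a)%Z -> ~~ (p %| b)%Z -> ~~ (p %| a * b)%Z.
Proof.
rewrite !dvdzE abszM /= => Ha Hb; by rewrite Euclid_dvdM // negb_or Ha Hb.
Qed.

Lemma ndvd1 : ~~ (p %| 1)%Z.
Proof. by rewrite dvdzE /= dvdn1; case: eqP pP => // ->. Qed.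

Lemma pint_int (z : int) : pint z%:~R.
Proof. exists z, 1; split; first exact: ndvd1. by rewrite divr1. Qed.

Lemma pint_nat (m : nat) : pint m%:R.
Proof. by have := pint_int m; rewrite -pmulrn. Qed.

Lemma pintD r s : pint r -> pint s -> pint (r + s).
Proof.
move=> [a [b [Hb ->]]] [c [d [Hd ->]]].
exists (a * d + c * b), (b * d); split; first exact: ndvdM.
have := ndvd_neq0 Hb; have := ndvd_neq0 Hd => H1 H2.
rewrite rmorphD !rmorphM /=. by field; apply/andP.
Qed.

Lemma pintM r s : pint r -> pint s -> pint (r * s).
Proof.
move=> [a [b [Hb ->]]] [c [d [Hd ->]]].
exists (a * c), (b * d); split; first exact: ndvdM.
have := ndvd_neq0 Hb; have := ndvd_neq0 Hd => H1 H2.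
rewrite !rmorphM /=. by field; apply/andP.
Qed.

Lemma pintN r : pint r -> pint (- r).
Proof.
move=> Hr; have -> : - r = (-1)%:~R * r by rewrite mulN1r.
apply: pintM => //; exact: pint_int.
Qed.

Lemma pintB r s : pint r -> pint s -> pint (r - s).
Proof. by move=> Hr Hs; apply: pintD => //; apply: pintN. Qed.

Lemma pint_inv (m : int) : ~~ (p %| m)%Z -> pint (m%:~R)^-1.
Proof. move=> Hm; exists 1, m; split => //; by rewrite mul1r. Qed.

Lemma p_neq0 : (p%:R : rat) != 0.
Proof. by rewrite pnatr_eq0; case: eqP pP => // ->. Qed.

Lemma pint_denq r : pint r -> ~~ (p %| denq r)%Z.
Proof.
move=> [a [b [Hb Hr]]]; apply/negP => Hd.
have Hn : ~~ (p %| numq r)%Z.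
  apply/negP => Hn.
  have := coprime_num_den r; rewrite /coprime => /eqP Hc.
  move: Hd Hn; rewrite !dvdzE /= => Hd Hn.
  have : (p %| gcdn `|numq r| `|denq r|)%N by rewrite dvdn_gcd Hn Hd.
  rewrite Hc dvdn1; by case: eqP pP => // ->.
have E : numq r * b = a * denq r.
  apply: (@intr_inj rat); rewrite !rmorphM /=.
  have := ndvd_neq0 Hb => Hb0; have Hd0 : (denq r)%:~R != 0 :> rat by rewrite intr_eq0 denq_neq0.
  have E : (numq r)%:~R / (denq r)%:~R = a%:~R / b%:~R :> rat by rewrite divq_num_den.
  have := congr1 (fun x => x * ((b%:~R : rat) * (denq r)%:~R)) E.
  have -> : (numq r)%:~R / (denq r)%:~R * ((b%:~R : rat) * (denq r)%:~R) = (numq r)%:~R * b%:~R.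
    by field.
  move=> ->; by field.
have : (p %| numq r * b)%Z by rewrite E dvdz_mull.
rewrite !dvdzE abszM Euclid_dvdM // -!dvdzE; apply/negP; by rewrite negb_or Hn Hb.
Qed.

Lemma pint_pow0 r : (forall t, pint (r / (p ^ t)%:R)) -> r = 0.
Proof.
move=> H; have [->//|r0] := eqVneq r 0.
have n0 : (0 < `|numq r|)%N by rewrite absz_gt0 numq_eq0.
have [a [b [Hb E]]] := H `|numq r|%N.
have Hb0 := ndvd_neq0 Hb.
have Hd0 : (denq r)%:~R != 0 :> rat by rewrite intr_eq0 denq_neq0.
have Hp0 : ((p ^ `|numq r|)%N%:R : rat) != 0 by rewrite natrX expf_neq0 // p_neq0.
have Hp1 : (((p ^ `|numq r|)%N%:Z)%:~R : rat) != 0 by [].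
have E2 : numq r * b = a * denq r * (p ^ `|numq r|)%N%:Z.
  apply: (@intr_inj rat); rewrite !rmorphM /=.

  have E3 : (numq r)%:~R / (denq r)%:~R / (((p ^ `|numq r|)%N%:Z)%:~R) = a%:~R / b%:~R :> rat.
    by rewrite divq_num_den.
  have := congr1 (fun x => x * ((b%:~R : rat) * (denq r)%:~R * (((p ^ `|numq r|)%N%:Z)%:~R))) E3.
  have -> : (numq r)%:~R / (denq r)%:~R / (((p ^ `|numq r|)%N%:Z)%:~R) *
     ((b%:~R : rat) * (denq r)%:~R * (((p ^ `|numq r|)%N%:Z)%:~R)) = (numq r)%:~R * b%:~R.
    by field; rewrite ?Hp1 ?Hd0 ?Hb0.
  move=> ->; field; by rewrite ?Hp1 ?Hd0 ?Hb0.
have Hdv : (p ^ `|numq r| %| `|numq r| * `|b|)%N.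
  by rewrite -abszM E2 abszM dvdn_mull.
rewrite Gauss_dvdl in Hdv; last first.
  rewrite coprime_pexpl //.
  by rewrite prime_coprime // -dvdzE.
have := dvdn_leq n0 Hdv; rewrite leqNgt ltn_expl //; exact: prime_gt1.
Qed.

Definition red (r : rat) : 'F_p := (numq r)%:~R / (denq r)%:~R.

Lemma red_eq r s : pint r -> pint s -> red r = red s -> pint ((r - s) / p%:R).
Proof.
move=> Hr Hs; rewrite /red => E.
have Hd1 := pint_denq Hr; have Hd2 := pint_denq Hs.
have cF := pchar_Fp pP.
have F1 : ((denq r)%:~R : 'F_p) != 0 by rewrite -(dvdz_pcharf cF).
have F2 : ((denq s)%:~R : 'F_p) != 0 by rewrite -(dvdz_pcharf cF).
have Z : ((numq r * denq s - numq s * denq r)%:~R : 'F_p) = 0.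
  rewrite rmorphB !rmorphM /=; exact: cross_eq.
have Hp : (p %| numq r * denq s - numq s * denq r)%Z by rewrite (dvdz_pcharf cF) Z.
exists ((numq r * denq s - numq s * denq r) %/ p)%Z, (denq r * denq s); split.
  exact: ndvdM.
have Ep := divzK Hp.
have Dr : (denq r)%:~R != 0 :> rat by rewrite intr_eq0 denq_neq0.
have Ds : (denq s)%:~R != 0 :> rat by rewrite intr_eq0 denq_neq0.
have P0 := p_neq0.
rewrite -{1}(divq_num_den r) -{1}(divq_num_den s).
apply: (mulIf P0); rewrite -mulrA mulVf // mulr1.
rewrite rmorphM /= mulrAC.
have -> : ((((numq r * denq s - numq s * denq r) %/ p)%Z)%:~R : rat) * p%:R = 
   (numq r * denq s - numq s * denq r)%:~R.
  by rewrite -{2}Ep rmorphM.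
rewrite rmorphB !rmorphM /=; field; by rewrite Dr Ds.
Qed.
End Pint.

Section KQ.
Variables (k : fieldType) (C : numFieldType) (f : {rmorphism k -> C}).

Lemma fr (a : rat) : f (ratr a) = ratr a.
Proof. exact: fmorph_rat. Qed.

Lemma rkD (a b : rat) : ratr (a + b) = ratr a + ratr b :> k.
Proof. apply: (fmorph_inj f); by rewrite rmorphD /= !fr rmorphD. Qed.
Lemma rkM (a b : rat) : ratr (a * b) = ratr a * ratr b :> k.
Proof. apply: (fmorph_inj f); by rewrite fr [RHS]rmorphM /= !fr rmorphM. Qed.
Lemma rkN (a : rat) : ratr (- a) = - ratr a :> k.
Proof. apply: (fmorph_inj f); by rewrite fr [RHS]rmorphN /= !fr rmorphN. Qed.
Lemma rkB (a b : rat) : ratr (a - b) = ratr a - ratr b :> k.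
Proof. by rewrite rkD rkN. Qed.
Lemma rkV (a : rat) : ratr (a^-1) = (ratr a)^-1 :> k.
Proof. apply: (fmorph_inj f); by rewrite fmorphV /= !fr fmorphV. Qed.
Lemma rk0 : ratr 0 = 0 :> k.
Proof. by have := ratr_int k 0. Qed.
Lemma rk_sum (I : Type) (r : seq I) (F : I -> rat) :
  ratr (\sum_(i <- r) F i) = \sum_(i <- r) ratr (F i) :> k.
Proof. by apply: (big_morph _ rkD rk0). Qed.
Lemma natk_neq0 (m : nat) : (0 < m)%N -> (m%:R : k) != 0.
Proof. move=> Hm; apply/eqP => /(congr1 f); rewrite rmorph_nat rmorph0 => /eqP.
by rewrite pnatr_eq0; case: m Hm. Qed.

Definition spanning d (b : 'I_d -> k) :=
  forall x : k, exists c : 'I_d -> rat, x = \sum_(i < d) ratr (c i) * b i.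
Definition indep d (b : 'I_d -> k) :=
  forall c : 'I_d -> rat, \sum_(i < d) ratr (c i) * b i = 0 -> forall i, c i = 0.

Lemma basis_ex : finite_over_Q k -> exists d (b : 'I_d -> k), spanning b /\ indep b.
Proof.
move=> [d [b Hb]]; elim: d b Hb => [|d IH] b Hb.
  by exists 0%N, b; split => // c _ [].
case: (classic (indep b)) => Hi; first by exists d.+1, b.
have [c Hc] : exists c : 'I_d.+1 -> rat, ~ (\sum_(i < d.+1) ratr (c i) * b i = 0 -> forall i, c i = 0).
  by apply: NNPP => H; apply: Hi => c; apply: NNPP => H'; apply: H; exists c.
have [Hs Hc2] : \sum_(i < d.+1) ratr (c i) * b i = 0 /\ ~ (forall i, c i = 0).
  by split; [apply: NNPP => H; apply: Hc => /H| move=> H; apply: Hc].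
have [i0 Hi0] : exists i0, c i0 != 0.
  by apply: NNPP => H; apply: Hc2 => i; apply/eqP; apply: NNPP => H'; apply: H; exists i; apply/negP.
apply: (IH (fun j => b (lift i0 j))) => x.
have [e He] := Hb x.
exists (fun j => e (lift i0 j) - e i0 * c (lift i0 j) / c i0).
have ci0 : ratr (c i0) != 0 :> k.
  apply/eqP => /(congr1 f); rewrite fr rmorph0 => /eqP; by rewrite fmorph_eq0 (negPf Hi0).
rewrite (bigD1_ord i0) // in He; rewrite (bigD1_ord i0) // in Hs.
have Eb : b i0 = - (ratr (c i0))^-1 * \sum_(j < d) ratr (c (lift i0 j)) * b (lift i0 j).
  apply: (mulfI ci0); rewrite mulrA mulrN mulfV // mulN1r; apply/eqP; rewrite -addr_eq0; exact/eqP.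
rewrite He Eb.
under [in RHS]eq_bigr => j _ do rewrite rkB !rkM rkV mulrBl.
rewrite sumrB addrC; congr (_ + _).
rewrite mulNr mulrN mulrA mulr_sumr; congr (- _); apply: eq_bigr => j _.
by rewrite mulrA; congr (_ * _); rewrite mulrAC.
Qed.
End KQ.

Lemma strict_nil (F : pzRingType) n (S : 'M[F]_n.+1) :
  (forall i j : 'I_n.+1, (j <= i)%N -> S i j = 0) -> S ^+ n.+1 = 0.
Proof.
move=> HS.
have H : forall t (i j : 'I_n.+1), (j < i + t)%N -> (S ^+ t) i j = 0.
  elim=> [|t IH] i j Hij.
    rewrite expr0 mxE; move: Hij; rewrite addn0 => Hij.
    by rewrite (_ : (i == j) = false) // eq_sym; apply: ltn_eqF.
  rewrite exprSr -mulmxE mxE big1 // => l _.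
  case: (ltnP l (i + t)) => Hl; first by rewrite IH // mul0r.
  rewrite HS ?mulr0 //; rewrite addnS ltnS in Hij; exact: leq_trans Hij Hl.
apply/matrixP => i j; rewrite H ?mxE //; apply: leq_trans (ltn_ord j) _; exact: leq_addl.
Qed.

Lemma conj_exp (F : fieldType) n (P M : 'M[F]_n.+1) t : P \in unitmx ->
  (P * M * P^-1) ^+ t = P * M ^+ t * P^-1.
Proof.
move=> HP; elim: t => [|t IH]; first by rewrite !expr0 mulr1 mulrV.
rewrite exprSr IH -!mulrA; congr (_ * _).
by rewrite mulKr // exprSr mulrA.
Qed.

Lemma map_mx_exp (F : fieldType) (K : fieldType) (f : {rmorphism F -> K}) n (M : 'M[F]_n.+1) t :
  map_mx f (M ^+ t) = (map_mx f M) ^+ t.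
Proof.
elim: t => [|t IH]; first by rewrite !expr0 map_mx1.
by rewrite !exprSr -!mulmxE map_mxM IH.
Qed.

Lemma unip_nil (k K : fieldType) (f : {rmorphism k -> K}) n (P : 'M[K]_n.+1) (g : 'M[k]_n.+1) :
  P \in unitmx -> upper_unitriangular (P *m map_mx f g *m invmx P) -> (g - 1) ^+ n.+1 = 0.
Proof.
move=> HP HU.
set U := P *m map_mx f g *m invmx P.
have EU : U - 1 = P * map_mx f (g - 1) * P^-1.
  by rewrite map_mxB map_mx1 mulrBr mulrBl mulr1 mulrV.
have HU' : upper_unitriangular U by [].
clearbody U.
have HS : (U - 1) ^+ n.+1 = 0.
  apply: strict_nil => i j Hji; rewrite !mxE.
  have [Hu1 Hu2] := HU' i j.
  case: (ltnP j i) => Hl.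
    by rewrite Hu1 // (_ : (i == j) = false) ?subrr // ; apply: gtn_eqF.
  have Eij : i = j by apply: val_inj; apply/eqP; rewrite eqn_leq Hl Hji.
  by rewrite Hu2 // Eij eqxx subrr.
have := HS; rewrite EU conj_exp // -map_mx_exp => H0.
apply: (@map_mx_inj _ _ f); rewrite map_mx0.
have := congr1 (fun X => P^-1 * X * P) H0; rewrite mulr0 mul0r !mulrA mulVr // mul1r.
by rewrite -mulrA mulVr // mulr1.
Qed.

Lemma mxpowE (F : fieldType) n (g : 'M[F]_n.+1) m : mxpow g m = g ^+ m.
Proof. elim: m => [|m IH] //=; by rewrite IH exprS mulmxE. Qed.

Lemma two_primes (R : pzRingType) (x : R) p q a b : prime p -> prime q -> p != q ->
  x ^+ (p ^ a) = 1 -> x ^+ (q ^ b) = 1 -> x = 1.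
Proof.
move=> pP qP pq Ha Hb.
have pa0 : (0 < p ^ a)%N by rewrite expn_gt0 prime_gt0.
have [u _ Hu] := Bezoutl (q ^ b) pa0.
have cop : coprime (p ^ a) (q ^ b).
  by rewrite coprimeXl // coprimeXr // prime_coprime // dvdn_prime2 // eq_sym.
rewrite (eqP cop) in Hu; move/dvdnP: Hu => [v Ev].
have : x ^+ (1 + u * q ^ b) = 1 by rewrite Ev [(v * _)%N]mulnC exprM Ha expr1n.
by rewrite exprD expr1 mulnC exprM Hb expr1n mulr1.
Qed.

Lemma reps (T : finType) (M : eqType) (P : M -> Prop) (psi : M -> T) :
  exists s : seq M, (forall x, x \in s -> P x) /\
    forall g, P g -> exists2 x, x \in s & psi x = psi g.
Proof.
suff H : forall l : seq T, exists s : seq M, (forall x, x \in s -> P x) /\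
    forall g, P g -> psi g \in l -> exists2 x, x \in s & psi x = psi g.
  have [s [H1 H2]] := H (enum T); exists s; split => // g Pg; apply: H2 => //; by rewrite mem_enum.
elim=> [|y l [s [H1 H2]]]; first by exists [::].
case: (classic (exists g, P g /\ psi g = y)) => [[g0 [Pg0 Eg0]]|Hn].
  exists (g0 :: s); split.
    by move=> x; rewrite inE => /orP [/eqP ->|/H1].
  move=> g Pg; rewrite inE => /orP [/eqP Ey|Hl].
    by exists g0; rewrite ?inE ?eqxx // Eg0 Ey.
  have [x xs Ex] := H2 g Pg Hl; exists x => //; by rewrite inE xs orbT.
exists s; split => // g Pg; rewrite inE => /orP [/eqP Ey|Hl]; last exact: H2.
by exfalso; apply: Hn; exists g.
Qed.

Lemma pint_small p r : prime p -> (`|denq r| < p)%N -> pint p r.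
Proof.
move=> pP Hr; exists (numq r), (denq r); split; last by rewrite divq_num_den.
rewrite dvdzE /= gtnNdvd //; by rewrite absz_gt0 denq_neq0.
Qed.

Section Coord.
Variables (k : fieldType) (C : numFieldType) (f : {rmorphism k -> C}).
Variables (d : nat) (b : 'I_d -> k).
Hypotheses (Hsp : spanning b) (Hin : indep b).

Definition coord (x : k) : 'I_d -> rat :=
  proj1_sig (constructive_indefinite_description _ (Hsp x)).

Lemma coordE x : x = \sum_(i < d) ratr (coord x i) * b i.
Proof. rewrite /coord; by case: constructive_indefinite_description. Qed.

Lemma coord_uniq x c : x = \sum_(i < d) ratr (c i) * b i -> forall i, coord x i = c i.
Proof.
move=> Hx.
have H0 : \sum_(i < d) ratr (coord x i - c i) * b i = 0.
  under eq_bigr => i _ do rewrite (rkB f) mulrBl.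
  by rewrite sumrB -coordE -Hx subrr.
move=> i; have := Hin H0 i; move/eqP; rewrite subr_eq0; by move/eqP.
Qed.

Lemma coordD x y i : coord (x + y) i = coord x i + coord y i.
Proof.
apply: (coord_uniq (c := fun j => coord x j + coord y j) _ i).
under eq_bigr => j _ do rewrite (rkD f) mulrDl.
by rewrite big_split /= -!coordE.
Qed.

Lemma coord0 i : coord 0 i = 0.
Proof.
apply: (coord_uniq (c := fun j => 0) _ i); rewrite big1 // => j _; by rewrite (rk0 k) mul0r.
Qed.

Lemma coordZ q x i : coord (ratr q * x) i = q * coord x i.
Proof.
apply: (coord_uniq (c := fun j => q * coord x j) _ i).
under eq_bigr => j _ do rewrite (rkM f) -mulrA.
by rewrite -mulr_sumr -coordE.
Qed.

Lemma coordN x i : coord (- x) i = - coord x i.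
Proof.
have -> : - x = ratr (-1) * x by rewrite (rkN f) (ratr_nat k 1) mulN1r.
by rewrite coordZ mulN1r.
Qed.

Lemma coordB x y i : coord (x - y) i = coord x i - coord y i.
Proof. by rewrite coordD coordN. Qed.

Lemma coord_sum (I : Type) (r : seq I) (P : pred I) (F : I -> k) l :
  coord (\sum_(i <- r | P i) F i) l = \sum_(i <- r | P i) coord (F i) l.
Proof. exact: (big_morph (fun x => coord x l) (fun x y => coordD x y l) (coord0 l)). Qed.

Lemma coord_eq0 x : (forall i, coord x i = 0) -> x = 0.
Proof.
move=> H; rewrite (coordE x) big1 // => i _; by rewrite H (rk0 k) mul0r.
Qed.

Section Ap.
Variable p : nat.
Hypothesis pP : prime p.
Hypothesis Hst : forall i j l, pint p (coord (b i * b j) l).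
Hypothesis H1 : forall l, pint p (coord 1 l).

Definition Ap x := forall l, pint p (coord x l).

Lemma pint0 : pint p 0.
Proof. by have := pint_int pP 0. Qed.

Lemma pint_sum (I : Type) (r : seq I) (P : pred I) (F : I -> rat) :
  (forall i, P i -> pint p (F i)) -> pint p (\sum_(i <- r | P i) F i).
Proof. move=> H; apply: big_ind => //; [exact: pint0 | exact: pintD]. Qed.

Lemma Ap0 : Ap 0.
Proof. by move=> l; rewrite coord0; exact: pint0. Qed.
Lemma Ap1 : Ap 1.
Proof. exact: H1. Qed.
Lemma ApD x y : Ap x -> Ap y -> Ap (x + y).
Proof. by move=> Hx Hy l; rewrite coordD; apply: pintD. Qed.
Lemma ApN x : Ap x -> Ap (- x).
Proof. by move=> Hx l; rewrite coordN; apply: pintN. Qed.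
Lemma ApB x y : Ap x -> Ap y -> Ap (x - y).
Proof. by move=> Hx Hy; apply: ApD => //; apply: ApN. Qed.
Lemma Ap_sum (I : Type) (r : seq I) (P : pred I) (F : I -> k) :
  (forall i, P i -> Ap (F i)) -> Ap (\sum_(i <- r | P i) F i).
Proof. move=> H; apply: big_ind => //; [exact: Ap0 | exact: ApD]. Qed.
Lemma ApZ q x : pint p q -> Ap x -> Ap (ratr q * x).
Proof. by move=> Hq Hx l; rewrite coordZ; apply: pintM. Qed.
Lemma Ap_rat q : pint p q -> Ap (ratr q).
Proof. by move=> Hq; rewrite -[ratr q]mulr1; apply: ApZ => //; exact: Ap1. Qed.
Lemma Ap_nat m : Ap m%:R.
Proof. by rewrite -(ratr_nat k m); apply: Ap_rat; apply: pint_nat. Qed.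

Lemma Ap_lin (F : 'I_d -> k) (c : 'I_d -> rat) :
  (forall i, pint p (c i)) -> (forall i, Ap (F i)) -> Ap (\sum_(i < d) ratr (c i) * F i).
Proof. move=> Hc HF; apply: Ap_sum => i _; exact: ApZ. Qed.

Lemma ApM x y : Ap x -> Ap y -> Ap (x * y).
Proof.
move=> Hx Hy; rewrite (coordE x) mulr_suml.
under eq_bigr => i _ do rewrite -mulrA.
apply: Ap_lin => // i; rewrite (coordE y) mulr_sumr.
under eq_bigr => j _ do rewrite mulrCA.
apply: Ap_lin => // j l; exact: Hst.
Qed.


Lemma pk_neq0 t : ((p ^ t)%:R : k) != 0.
Proof. apply: (natk_neq0 f); by rewrite expn_gt0 prime_gt0. Qed.

Definition Dvn t x := Ap (x / (p ^ t)%:R).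

Lemma Dvn0E x : Dvn 0 x <-> Ap x.
Proof. by rewrite /Dvn expn0 divr1. Qed.

Lemma Dvn_0 t : Dvn t 0.
Proof. rewrite /Dvn mul0r; exact: Ap0. Qed.
Lemma DvnD t x y : Dvn t x -> Dvn t y -> Dvn t (x + y).
Proof. rewrite /Dvn mulrDl; exact: ApD. Qed.
Lemma DvnN t x : Dvn t x -> Dvn t (- x).
Proof. rewrite /Dvn mulNr; exact: ApN. Qed.
Lemma DvnB t x y : Dvn t x -> Dvn t y -> Dvn t (x - y).
Proof. by move=> Hx Hy; apply: DvnD => //; apply: DvnN. Qed.
Lemma Dvn_sum t (I : Type) (r : seq I) (P : pred I) (F : I -> k) :
  (forall i, P i -> Dvn t (F i)) -> Dvn t (\sum_(i <- r | P i) F i).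
Proof. move=> H; apply: big_ind => //; [exact: Dvn_0 | exact: DvnD]. Qed.
Lemma Dvn_mul s t x y : Dvn s x -> Dvn t y -> Dvn (s + t) (x * y).
Proof.
rewrite /Dvn => Hx Hy.
have -> : x * y / (p ^ (s + t))%:R = (x / (p ^ s)%:R) * (y / (p ^ t)%:R).
  rewrite expnD natrM; have := pk_neq0 s; have := pk_neq0 t => Q1 Q2; by field; rewrite Q1 Q2.
exact: ApM.
Qed.
Lemma Dvn_p x : Ap x -> Dvn 1 (x *+ p).
Proof.
move=> Hx; rewrite /Dvn expn1 -[x *+ p]mulr_natr mulfK //; have := pk_neq0 1; by rewrite expn1.
Qed.
Lemma Dvn_coord t x l : Dvn t x -> pint p (coord x l / (p ^ t)%:R).
Proof.
rewrite /Dvn => H; have := H l.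
rewrite mulrC -(ratr_nat k) -(rkV f) coordZ mulrC. 
by rewrite -(ratr_nat rat) /ratr_nat.
Qed.

Lemma Dvn_of_coord t x : (forall l, pint p (coord x l / (p ^ t)%:R)) -> Dvn t x.
Proof.
rewrite /Dvn => H l.
rewrite mulrC -(ratr_nat k) -(rkV f) coordZ mulrC; exact: H.
Qed.

Definition MDn t n (M : 'M[k]_n) := forall i j, Dvn t (M i j).

Lemma MDn_mul s t n (A B : 'M[k]_n) : MDn s A -> MDn t B -> MDn (s + t) (A *m B).
Proof. move=> HA HB i j; rewrite mxE; apply: Dvn_sum => l _; exact: Dvn_mul. Qed.
Lemma MDn_add t n (A B : 'M[k]_n) : MDn t A -> MDn t B -> MDn t (A + B).
Proof. move=> HA HB i j; rewrite mxE; exact: DvnD. Qed.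
Lemma MDn_opp t n (A : 'M[k]_n) : MDn t A -> MDn t (- A).
Proof. move=> HA i j; rewrite mxE; exact: DvnN. Qed.
Lemma MDn_sub t n (A B : 'M[k]_n) : MDn t A -> MDn t B -> MDn t (A - B).
Proof. by move=> HA HB; apply: MDn_add => //; apply: MDn_opp. Qed.
Lemma MDn_0 t n : MDn t (0 : 'M[k]_n).
Proof. move=> i j; rewrite mxE; exact: Dvn_0. Qed.
Lemma MDn_sum t n (I : Type) (r : seq I) (P : pred I) (F : I -> 'M[k]_n) :
  (forall i, P i -> MDn t (F i)) -> MDn t (\sum_(i <- r | P i) F i).
Proof. move=> H; apply: big_ind => //; [exact: MDn_0 | exact: MDn_add]. Qed.
Lemma MDn_1 n : MDn 0 (1%:M : 'M[k]_n).
Proof. move=> i j; rewrite mxE; apply/Dvn0E; exact: Ap_nat. Qed.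
Lemma MDn_scale t n c (A : 'M[k]_n) : Ap c -> MDn t A -> MDn t (c *: A).
Proof.
move=> Hc HA i j; rewrite mxE; have := @Dvn_mul 0 t c (A i j); rewrite add0n; apply => //.
exact/Dvn0E.
Qed.
Lemma MDn_muln t n (A : 'M[k]_n) m : MDn t A -> MDn t (A *+ m).
Proof. move=> HA; rewrite -scaler_nat; apply: MDn_scale => //; exact: Ap_nat. Qed.
Lemma MDn_p n (A : 'M[k]_n) : MDn 0 A -> MDn 1 (A *+ p).
Proof. move=> HA i j; rewrite mulmxnE; apply: Dvn_p; exact/Dvn0E. Qed.
Lemma MDn_exp t n (V : 'M[k]_n.+1) e : MDn t V -> MDn (t * e) (V ^+ e).
Proof.
move=> HV; elim: e => [|e IH]; first by rewrite muln0 expr0; exact: MDn_1.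
rewrite exprSr mulnS addnC; exact: MDn_mul.
Qed.

Lemma KL n (h : 'M[k]_n.+1) m : MDn 0 h -> MDn 1 (h - 1) -> h ^+ m = 1 -> ~~ (p %| m)%N -> h = 1.
Proof.
move=> Hh HX Hm Hpm.
have HX0 : MDn 0 (h - 1) by apply: MDn_sub => //; exact: MDn_1.
move: Hh HX HX0 Hm; set X := h - 1 => Hh HX HX0 Hm.
have hE : h = X + 1 by rewrite /X subrK.
move: Hm; rewrite hE exprD1n.
case: m Hpm => [|m']; first by rewrite dvdn0.
move=> Hpm.
rewrite big_ord_recl big_ord_recl /=.
set T := \sum_(i < m') X ^+ i *+ 'C(m'.+1, i.+2).
have E2 : \sum_(i < m') X ^+ bump 0 (bump 0 i) *+ 'C(m'.+1, bump 0 (bump 0 i)) = X * (X * T).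
  rewrite /T !mulr_sumr; apply: eq_bigr => i _; rewrite /bump /= !add1n.
  by rewrite !mulrnAr -!exprS.
rewrite E2 expr0 bin0 mulr1n /bump /= addn0 expr1 bin1 addrC.
move=> /(congr1 (fun x => x - 1)); rewrite addrK subrr => /eqP; rewrite addr_eq0 => /eqP Em.
have m0 : (m'.+1%:R : k) != 0 by apply: (natk_neq0 f).
set c : k := (m'.+1%:R)^-1.
set V := - (c *: (X * T)).
have XV : X = X * V.
  rewrite /V mulrN -scalerAr -scalerN -Em -scaler_nat scalerA.
  by rewrite /c mulVf // scale1r.
have Hc : Ap c.
  have -> : c = ratr ((m'.+1%:~R : rat)^-1).
    by rewrite (rkV f) /c (ratr_int k).
  apply: Ap_rat; apply: pint_inv => //; by rewrite dvdzE.
have HT : MDn 0 T.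
  apply: MDn_sum => i _; apply: MDn_muln; have := MDn_exp i HX0; by rewrite mul0n.
have HV : MDn 1 V.
  apply: MDn_opp; apply: MDn_scale => //; have := MDn_mul HX HT; by rewrite addn0.
have XVt : forall t, X = X * V ^+ t.
  elim=> [|t IH]; first by rewrite expr0 mulr1.
  by rewrite exprSr mulrA -IH -XV.
have HXt : forall t, MDn t X.
  move=> t; rewrite (XVt t); have := MDn_mul HX0 (MDn_exp t HV); by rewrite mul1n add0n.
suff -> : X = 0 by rewrite add0r.
apply/matrixP => i j; rewrite [RHS]mxE; apply: coord_eq0 => l.
apply: (pint_pow0 pP) => t; apply: Dvn_coord; exact: HXt.
Qed.

Lemma CP n (A B : 'M[k]_n.+1) : MDn 0 A -> MDn 0 B -> MDn 1 (A - B) ->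
  forall t, MDn 1 (A ^+ t - B ^+ t).
Proof.
move=> HA HB HAB; elim=> [|t IH]; first by rewrite !expr0 subrr; exact: MDn_0.
have -> : A ^+ t.+1 - B ^+ t.+1 = (A - B) * A ^+ t + B * (A ^+ t - B ^+ t).
  by rewrite !exprS mulrBl mulrBr addrA subrK.
apply: MDn_add.
  have := MDn_mul HAB (MDn_exp t HA); by rewrite mul0n addn0.
have := MDn_mul HB IH; by rewrite add0n.
Qed.

Lemma UL n (g : 'M[k]_n.+1) : MDn 0 g -> (g - 1) ^+ n.+1 = 0 ->
  MDn 1 (g ^+ (p ^ n.+1) - 1).
Proof.
move=> Hg Hn.
have HX0 : MDn 0 (g - 1) by apply: MDn_sub => //; exact: MDn_1.
move: HX0 Hn; set X := g - 1 => HX0 Hn.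
have gE : g = X + 1 by rewrite /X subrK.
have Nlt : (n.+1 < p ^ n.+1)%N by apply: ltn_expl; exact: prime_gt1.
rewrite gE exprD1n big_ord_recl expr0 bin0 mulr1n addrAC subrr add0r.
apply: MDn_sum => i _; rewrite lift0.
case: (ltnP i.+1 (p ^ n.+1)) => Hi.
  have /dvdnP [c Ec] : (p %| 'C(p ^ n.+1, i.+1))%N by apply: bin_pexp0 => //; rewrite Hi andbT.
  rewrite Ec mulrnA; apply: MDn_p; apply: MDn_muln.
  have := MDn_exp i.+1 HX0; by rewrite mul0n.
have -> : X ^+ i.+1 = 0.
  by rewrite -(subnKC (leq_trans (ltnW Nlt) Hi)) exprD Hn mul0r.
rewrite mul0rn; exact: MDn_0.
Qed.

Lemma TL n (g c : 'M[k]_n.+1) m : MDn 0 g -> MDn 0 c -> MDn 1 (g - c) ->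
  (c - 1) ^+ n.+1 = 0 -> g ^+ m = 1 -> (0 < m)%N -> exists a, g ^+ (p ^ a) = 1.
Proof.
move=> Hg Hc Hgc Hn Hm m0.
have U := UL Hc Hn.
have C1 := CP Hg Hc Hgc (p ^ n.+1).
have HgN : MDn 1 (g ^+ (p ^ n.+1) - 1).
  have -> : g ^+ (p ^ n.+1) - 1 = (g ^+ (p ^ n.+1) - c ^+ (p ^ n.+1)) + (c ^+ (p ^ n.+1) - 1).
    by rewrite addrA subrK.
  exact: MDn_add.
have HgN0 : MDn 0 (g ^+ (p ^ n.+1)) by have := MDn_exp (p ^ n.+1) Hg; rewrite mul0n.
have [m' cop Em] := pfactor_coprime pP m0.
set h := (g ^+ (p ^ n.+1)) ^+ (p ^ logn p m).
have Hh0 : MDn 0 h by have := MDn_exp (p ^ logn p m) HgN0; rewrite mul0n.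
have Hh1 : MDn 1 (h - 1).
  have := CP HgN0 (MDn_1 (n:=n.+1)) HgN (p ^ logn p m); by rewrite expr1n.
have hm : h ^+ m' = 1.
  rewrite /h -!exprM [(p ^ logn p m * m')%N]mulnC -Em mulnC exprM Hm; exact: expr1n.
have h1 : h = 1 by apply: (KL Hh0 Hh1 hm); rewrite -prime_coprime.
exists (n.+1 + logn p m)%N; by rewrite expnD exprM.
Qed.

End Ap.

Lemma main_pos n (Lambda Gamma : 'M[k]_n.+1 -> Prop) (s : seq 'M[k]_n.+1) p q :
  prime p -> prime q -> p != q ->
  (forall i j l, pint p (coord (b i * b j) l)) -> (forall l, pint p (coord 1 l)) ->
  (forall i j l, pint q (coord (b i * b j) l)) -> (forall l, pint q (coord 1 l)) ->
  GL_subgroup Lambda -> (forall g, Lambda g <-> GL_generated s g) ->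
  all (fun x => x \in unitmx) s ->
  (forall x, x \in s -> [/\ MDn p 0 x, MDn p 0 (invmx x), MDn q 0 x & MDn q 0 (invmx x)]) ->
  GL_subgroup Gamma -> GL_subset Gamma Lambda ->
  (forall c, Gamma c -> (c - 1) ^+ n.+1 = 0) ->
  exists Lambda0 : 'M[k]_n.+1 -> Prop,
    [/\ GL_subgroup Lambda0, GL_subset Lambda0 Lambda,
        torsion_free Lambda0, finite_index Lambda0 Lambda &
        GL_subset Gamma Lambda0].
Proof.
move=> pP qP pq Hstp H1p Hstq H1q HL Hgen Hsu Hsgood HG HGL Hnil.
have [HL1 HLu HLm HLi] := HL.
have [HG1 HGu HGm HGi] := HG.
set H := fun g : 'M[k]_n.+1 => [/\ g \in unitmx, MDn p 0 g, MDn p 0 (invmx g),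
   MDn q 0 g & MDn q 0 (invmx g)].
have HH : GL_subgroup H.
  split.
  - rewrite /H invmx1; split; first exact: unitmx1.
    + exact (MDn_1 pP H1p (n:=n.+1)).
    + exact (MDn_1 pP H1p (n:=n.+1)).
    + exact (MDn_1 qP H1q (n:=n.+1)).
    + exact (MDn_1 qP H1q (n:=n.+1)).
  - by move=> g [].
  - move=> g h [gu g1 g2 g3 g4] [hu h1 h2 h3 h4].
    have E : invmx (g *m h) = invmx h *m invmx g := invrM gu hu.
    split; rewrite ?E.
    + by rewrite unitmx_mul gu.
    + exact (MDn_mul pP Hstp g1 h1).
    + exact (MDn_mul pP Hstp h2 g2).
    + exact (MDn_mul qP Hstq g3 h3).
    + exact (MDn_mul qP Hstq h4 g4).
  - move=> g [gu g1 g2 g3 g4]; split; rewrite ?invmxK //; by rewrite unitmx_inv.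
have LH : forall g, Lambda g -> H g.
  move=> g /Hgen Hg; apply: Hg HH _ => x xs.
  have [x1 x2 x3 x4] := Hsgood x xs; split => //.
  by move/allP: Hsu => /(_ x xs).
have GH : forall c, Gamma c -> H c by move=> c /HGL /LH.
exists (fun g => Lambda g /\ exists c, [/\ Gamma c, MDn p 1 (g - c) & MDn q 1 (g - c)]).
split.
- split.
  + split => //; exists 1%:M; rewrite subrr; split => //; [exact (MDn_0 pP _ (n:=n.+1)) | exact (MDn_0 qP _ (n:=n.+1))].
  + by move=> g [/HLu].
  + move=> g h [Lg [c1 [Gc1 Dp1 Dq1]]] [Lh [c2 [Gc2 Dp2 Dq2]]]; split; first exact: HLm.
    exists (c1 *m c2); split; first exact: HGm.
    * have -> : g *m h - c1 *m c2 = (g - c1) *m h + c1 *m (h - c2).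
        by rewrite mulmxBl mulmxBr addrA subrK.
      have [_ h1 _ _ _] := LH h Lh; have [_ c11 _ _ _] := GH c1 Gc1.
      refine (MDn_add pP _ _); [exact (MDn_mul pP Hstp Dp1 h1) | exact (MDn_mul pP Hstp c11 Dp2)].
    * have -> : g *m h - c1 *m c2 = (g - c1) *m h + c1 *m (h - c2).
        by rewrite mulmxBl mulmxBr addrA subrK.
      have [_ _ _ h1 _] := LH h Lh; have [_ _ _ c11 _] := GH c1 Gc1.
      refine (MDn_add qP _ _); [exact (MDn_mul qP Hstq Dq1 h1) | exact (MDn_mul qP Hstq c11 Dq2)].
  + move=> g [Lg [c [Gc Dp Dq]]]; split; first exact: HLi.
    exists (invmx c); split; first exact: HGi.
    * have [gu _ g2 _ _] := LH g Lg; have [cu _ c2 _ _] := GH c Gc.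
      have -> : invmx g - invmx c = invmx g *m (- (g - c)) *m invmx c.
        by rewrite opprB mulmxBr mulmxBl mulmxK // mulVmx // mul1mx.
      exact (MDn_mul pP Hstp (MDn_mul pP Hstp g2 (MDn_opp pP Dp)) c2).
    * have [gu _ _ _ g2] := LH g Lg; have [cu _ _ _ c2] := GH c Gc.
      have -> : invmx g - invmx c = invmx g *m (- (g - c)) *m invmx c.
        by rewrite opprB mulmxBr mulmxBl mulmxK // mulVmx // mul1mx.
      exact (MDn_mul qP Hstq (MDn_mul qP Hstq g2 (MDn_opp qP Dq)) c2).
- by move=> g [].
- move=> g m [Lg [c [Gc Dp Dq]]] m0; rewrite mxpowE => Hm.
  have [_ g1 _ g3 _] := LH g Lg; have [_ c1 _ c3 _] := GH c Gc.
  have [a Ha] := TL pP Hstp H1p g1 c1 Dp (Hnil c Gc) Hm m0.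
  have [a' Ha'] := TL qP Hstq H1q g3 c3 Dq (Hnil c Gc) Hm m0.
  exact: two_primes pP qP pq Ha Ha'.
- pose psi := fun g : 'M[k]_n.+1 => [ffun t : 'I_n.+1 * 'I_n.+1 * 'I_d =>
     (red p (coord (g t.1.1 t.1.2) t.2), red q (coord (g t.1.1 t.1.2) t.2))].
  have [s0 [Hs0 Hrep]] := reps Lambda psi.
  exists s0; split => // g Lg.
  have [x xs Ex] := Hrep g Lg; exists x => //.
  have Lx := Hs0 x xs.
  split; first by apply: HLm => //; apply: HLi.
  exists 1%:M.
  have -> : invmx x *m g - 1%:M = invmx x *m (g - x).
    by rewrite mulmxBr mulVmx //; apply: HLu.
  have [_ g1 _ g3 _] := LH g Lg; have [_ x1 x2 x3 x4] := LH x Lx.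
  have E : forall i j l, red p (coord (g i j) l) = red p (coord (x i j) l) /\
                         red q (coord (g i j) l) = red q (coord (x i j) l).
    move=> i j l; have := congr1 (fun F : {ffun 'I_n.+1 * 'I_n.+1 * 'I_d -> 'F_p * 'F_q} => F (i, j, l)) Ex; rewrite /psi !ffunE => EE.
    split; [exact (esym (congr1 fst EE)) | exact (esym (congr1 snd EE))].
  split => //.
  + refine (MDn_mul pP Hstp x2 _) => i j; rewrite !mxE.
    apply: Dvn_of_coord => l; rewrite expn1 coordB.
    refine (red_eq pP _ _ (proj1 (E i j l))).
      by have /Dvn0E := g1 i j; apply.
    by have /Dvn0E := x1 i j; apply.
  + refine (MDn_mul qP Hstq x4 _) => i j; rewrite !mxE.
    apply: Dvn_of_coord => l; rewrite expn1 coordB.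
    refine (red_eq qP _ _ (proj2 (E i j l))).
      by have /Dvn0E := g3 i j; apply.
    by have /Dvn0E := x3 i j; apply.
- move=> c Gc; split; first exact: HGL.
  exists c; rewrite subrr; split => //; [exact (MDn_0 pP _ (n:=n.+1)) | exact (MDn_0 qP _ (n:=n.+1))].
Qed.

End Coord.

Unset Implicit Arguments.

Theorem mainTheorem18 (R : realType) (k : fieldType)
  (f : {rmorphism k -> R[i]}) (n : nat)
  (Lambda Gamma : 'M[k]_n -> Prop) :
  finite_over_Q k ->
  GL_fingen Lambda ->
  GL_subgroup Gamma ->
  GL_subset Gamma Lambda ->
  unipotent_subgroup f Gamma ->
  exists Lambda0 : 'M[k]_n -> Prop,
    [/\ GL_subgroup Lambda0, GL_subset Lambda0 Lambda,
        torsion_free Lambda0, finite_index Lambda0 Lambda &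
        GL_subset Gamma Lambda0].
Proof.
move=> HkQ [HL [s [Hsu Hgen]]] HG HGL [P [HP HU]].
destruct n as [|n].
  exists Lambda; split => //.
  - by move=> g m _ _ _; rewrite [g]flatmx0 [1%:M]flatmx0.
  - exists [:: 1%:M]; split.
      by move=> x; rewrite inE => /eqP ->; case: HL.
    move=> g Lg; exists 1%:M; first by rewrite inE.
    by have -> : invmx 1%:M *m g = g by rewrite [LHS]flatmx0 [RHS]flatmx0.
have [d [b [Hsp Hin]]] := basis_ex f HkQ.
have [D1 HD1] : exists D, forall i j l, (`|denq (coord Hsp (b i * b j) l)| <= D)%N.
  exists (\max_(t : 'I_d * 'I_d * 'I_d) `|denq (coord Hsp (b t.1.1 * b t.1.2) t.2)|)%N => i j l.
  exact (leq_bigmax (F := fun t : 'I_d * 'I_d * 'I_d => `|denq (coord Hsp (b t.1.1 * b t.1.2) t.2)|%N) (i, j, l)).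
have [D2 HD2] : exists D, forall l, (`|denq (coord Hsp 1 l)| <= D)%N.
  exists (\max_(l : 'I_d) `|denq (coord Hsp 1 l)|)%N => l.
  exact (leq_bigmax (F := fun l : 'I_d => `|denq (coord Hsp 1 l)|%N) l).
pose G (x : 'M[k]_n.+1) := (\max_(t : 'I_n.+1 * 'I_n.+1 * 'I_d)
   maxn `|denq (coord Hsp (x t.1.1 t.1.2) t.2)| `|denq (coord Hsp (invmx x t.1.1 t.1.2) t.2)|)%N.
have [D3 HD3] : exists D, forall x, x \in s -> forall i j l,
    (`|denq (coord Hsp (x i j) l)| <= D)%N /\ (`|denq (coord Hsp (invmx x i j) l)| <= D)%N.
  exists (\max_(x <- s) G x)%N => x xs i j l.
  have H1 : (G x <= \max_(x <- s) G x)%N by exact (leq_bigmax_seq (F := G) x xs isT).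
  have H2 := leq_bigmax (F := fun t : 'I_n.+1 * 'I_n.+1 * 'I_d =>
     maxn `|denq (coord Hsp (x t.1.1 t.1.2) t.2)|%N `|denq (coord Hsp (invmx x t.1.1 t.1.2) t.2)|%N) (i, j, l).
  rewrite /= in H2.
  split; apply: leq_trans H1; apply: leq_trans H2; [exact: leq_maxl | exact: leq_maxr].
set D := (D1 + D2 + D3)%N.
have good : forall r, prime r -> (D < r)%N ->
   [/\ (forall i j l, pint r (coord Hsp (b i * b j) l)), (forall l, pint r (coord Hsp 1 l)) &
    forall x, x \in s -> MDn Hsp r 0 x /\ MDn Hsp r 0 (invmx x)].
  move=> r rP Dr; rewrite /D in Dr; split.
  - move=> i j l; apply: pint_small => //; have := HD1 i j l; lia.
  - move=> l; apply: pint_small => //; have := HD2 l; lia.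
  - move=> x xs; split => i j; apply/Dvn0E => l; apply: pint_small => //.
      apply: leq_ltn_trans (proj1 (HD3 x xs i j l)) _; lia.
    apply: leq_ltn_trans (proj2 (HD3 x xs i j l)) _; lia.
have [p Dp pP] := prime_above D.
have [q pq qP] := prime_above p.
have [Hstp H1p Hgp] := good p pP Dp.
have [Hstq H1q Hgq] := good q qP (ltn_trans Dp pq).
apply: (main_pos f Hin) pP qP _ Hstp H1p Hstq H1q HL Hgen Hsu _ HG HGL _.
- by rewrite neq_ltn pq.
- move=> x xs; have [? ?] := Hgp x xs; have [? ?] := Hgq x xs; by split.
- move=> c Gc; exact: unip_nil HP (HU c Gc).
Qed.
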